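(* Consider a unidirectional ring network of $M$ nodes (in the setting described in the context) under non-preemptive fixed-priority (FP) multiplexing, where each node $k$ offers a strict rate-latency service curve $\beta^k(t)=R^k(t-T^k)^+$ and each flow $i$ is leaky-bucket constrained with initial arrival curve $\sigma_i^0+\rho_i t$ at its source and arrival curve $\sigma_i^{k\ominus1}+\rho_i t$ at the input of each node $k$ on its path. Let $f$ be a flow and $n\in[1,h_f]$. Then the service curve offered to $f$ along $subpath_f(n)$ is the rate-latency curve $$\beta_f^{subpath_f(n)}(t)=R^{subpath_f(n)}\bigl(t-T^{subpath_f(n)}\bigr)^+,$$ where $$R^{subpath_f(n)}=\min_{k\in subpath_f(n)}\Bigl[R^k-\sum_{j\in hp_f^k}\rho_j\Bigr],$$ $$T^{subpath_f(n)}=\sum_{k\in subpath_f(n)}\Bigl(T^k+\frac{\max_{j\in lp_f^k}L_{max}(j)}{R^k}\Bigr)+\sum_{i\in\mathbb{K}_{\le f}(n)}\frac{\sigma_i^{f.first\ominus1}\,1_{\{i\ni f.first,\ i.first\neq f.first\}}}{R^{subpath_f(n)}}$$ $$\qquad+\sum_{i\in\mathbb{K}_{\le f}(n)}\frac{\sigma_i^0\,1_{\{f\ni i.first\}}+\rho_i\sum_{j\in subpath_f(n)\cap path_i}\Bigl(T^j+\frac{\max_{p\in lp_f^j}L_{max}(p)}{R^j}\Bigr)}{R^{subpath_f(n)}}.$$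
   Context: Network Calculus setting: flows are described by cumulative functions $F(t)$; $\alpha$ is an arrival curve if $F\le F\otimes\alpha$ with $(f\otimes g)(t)=\inf_{0\le s\le t}\{f(t-s)+g(s)\}$; $\beta$ is a service curve if output $F^*\ge F\otimes\beta$, strict if $F^*(t)-F^*(s)\ge\beta(t-s)$ on every backlogged period $(s,t)$. $[x]^+=\max(x,0)$. A service curve offered to $f$ along a subpath relates the input of $f$ at the first node of the subpath to its output at its last node. Ring model: nodes $1,\dots,M$ in a unidirectional ring, $l\oplus k=(l+k)\bmod M$, $l\ominus k=(l-k)\bmod M$. Each flow $i$ in a fixed finite set has path $path_i=(0,i.first,i.first\oplus1,\dots,i.first\oplus(h_i-1))$ with virtual source $0$, first hop $i.first$, $h_i\le M$ hops; $subpath_i(n)=(0,i.first,\dots,i.first\oplus(n-1))$. ''$i\ni k$'' means flow $i$ crosses node $k$. $\sigma_i^{k\ominus1}$ is the burst of flow $i$'s arrival curve at the input of node $k$; $\sigma_i^0$ its initial burst. The network is stable: $\sum_{i\ni k}\rho_i\le R^k$ for all $k$. FP notation: each flow $i$ has priority level $P(i)$ (0 is highest) and maximum packet length $L_{max}(i)$ (including protocol overhead); packets are transmitted non-preemptively, higher priority served first, flows within the same priority served in arbitrary order. $hp_f^k=\{i\neq f: i\ni k,\ P(i)\le P(f)\}$, $lp_f^k=\{i\ni k: P(i)>P(f)\}$ (the max over an empty set is taken as $0$), and $\mathbb{K}_{\le f}(n)=\{i\neq f:\exists k\in subpath_f(n),\ i\ni k,\ P(i)\le P(f)\}$. *)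

(* Defs.v *)
From HB Require Import structures.
From mathcomp Require Import all_boot all_order all_algebra.
From mathcomp Require Import boolp classical_sets reals.
Set Implicit Arguments. Unset Strict Implicit. Unset Printing Implicit Defensive.
Import Order.TTheory GRing.Theory Num.Theory.
Local Open Scope classical_set_scope.
Local Open Scope ring_scope.

Section NC.
Variable R : realType.

Definition pos (x : R) : R := Num.max 0 x.

Definition minplus_conv (f g : R -> R) (t : R) : R :=
  inf [set f (t - s) + g s | s in `[0, t]].

Definition arrival_curve (F alpha : R -> R) : Prop :=
  forall t, 0 <= t -> F t <= minplus_conv F alpha t.

Definition service_curve (F Fs beta : R -> R) : Prop :=
  forall t, 0 <= t -> minplus_conv F beta t <= Fs t.

Definition cumulative (F : R -> R) : Prop :=
  F 0 = 0 /\ forall s t, 0 <= s -> s <= t -> F s <= F t.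

Definition leaky_bucket (sigma rho : R) (t : R) : R := sigma + rho * t.
Definition rate_latency (Rt T : R) (t : R) : R := Rt * pos (t - T).
End NC.

(* ---------------- ring topology ----------------
   Nodes are labelled 0,...,M-1 (instead of 1,...,M); l (+) m = (l + m) mod M.
   A flow with first hop [fst] and [h] hops visits the nodes
   fst, fst(+)1, ..., fst(+)(h-1). The virtual source 0 of the paper is not a node. *)
Definition ring_node (M fst m : nat) : nat := (fst + m) %% M.

Definition path_nodes (M fst n : nat) : seq nat := [seq ring_node M fst m | m <- iota 0 n].

Section Ring.
Variables (M : nat) (Flow : finType) (first : Flow -> nat) (h : Flow -> nat)
          (P : Flow -> nat).

Definition crosses (i : Flow) (k : nat) : bool := k \in path_nodes M (first i) (h i).

Definition hp (f : Flow) (k : nat) : {set Flow} :=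
  [set i | (i != f) && crosses i k && (P i <= P f)%N].
Definition lp (f : Flow) (k : nat) : {set Flow} :=
  [set i | crosses i k && (P f < P i)%N].

Definition Kle (f : Flow) (n : nat) : {set Flow} :=
  [set i | (i != f) && (P i <= P f)%N && has (crosses i) (path_nodes M (first f) n)].
End Ring.

(* Main.v *)
Require Import Defs.
From HB Require Import structures.
From mathcomp Require Import all_boot all_order all_algebra.
From mathcomp Require Import boolp classical_sets reals.
From mathcomp Require Import zify lra.
Import Order.TTheory GRing.Theory Num.Theory.
Local Open Scope ring_scope.

Lemma modn_2M (M x : nat) : (0 < M)%N -> (x < 2 * M)%N ->
  (x %% M = if x < M then x else x - M)%N.
Proof.
move=> M0 xM; case: ifP => xlt; first by rewrite modn_small.
have -> : x = ((x - M) + M)%N by lia.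
by rewrite modnDr modn_small; lia.
Qed.

Lemma crossesP (M : nat) (Flow : finType) (first h : Flow -> nat) i k :
  reflect (exists2 p, (p < h i)%N & k = ring_node M (first i) p)
          (crosses M first h i k).
Proof.
rewrite /crosses /path_nodes; apply: (iffP mapP).
  by case=> p; rewrite mem_iota add0n => /andP[_ hp] ->; exists p.
by case=> p hp ->; exists p => //; rewrite mem_iota add0n.
Qed.

Lemma cross_char (M ff fj hj m : nat) : (0 < M)%N -> (ff < M)%N -> (fj < M)%N ->
  (0 < hj <= M)%N -> (m < M)%N ->
  (exists2 p, (p < hj)%N & ((ff + m) %% M = (fj + p) %% M)%N) <->
  (let d := ((fj + M - ff) %% M)%N in
   ((d <= m) && (m < d + hj)) || ((m < d) && (m + M < d + hj)))%N.
Proof.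
move=> M0 ffM fjM hjM mM /=.
have := @modn_2M M (fj + M - ff)%N M0.
move: ((fj + M - ff) %% M)%N => d hd.
have {}hd : (d = if fj + M - ff < M then fj + M - ff else fj + M - ff - M)%N.
  by rewrite hd //; lia.
split.
  case=> p hp.
  rewrite !(@modn_2M M _ M0); try lia.
  move: hd; repeat case: ifP; lia.
case/orP=> /andP[h1 h2].
  exists (m - d)%N; first lia.
  rewrite !(@modn_2M M _ M0); try lia.
  move: hd; repeat case: ifP; lia.
exists (m + M - d)%N; first lia.
rewrite !(@modn_2M M _ M0); try lia.
move: hd; repeat case: ifP; lia.
Qed.
Fixpoint back (T : Type) (U : nat -> T -> T) (n : nat) (t : T) (k : nat) : T :=
  match k with 0 => t | k'.+1 => U (n - k'.+1)%N (back T U n t k') end.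
Arguments back {T}.

Section Gen.
Context {R : realType}.

Lemma inf_le_elem (E : set R) (l x : R) :
  (forall y, E y -> l <= y) -> E x -> inf E <= x.
Proof. by move=> Hl Ex; apply: ge_inf => //; exists l. Qed.

Lemma conv_le (F G : R -> R) (t s : R) :
  (forall y, 0 <= y -> y <= t -> 0 <= F (t - y) + G y) ->
  0 <= s -> s <= t -> minplus_conv F G t <= F (t - s) + G s.
Proof.
move=> H0 hs hst; apply: (@inf_le_elem _ 0).
  by move=> y [z]; rewrite /= in_itv /= => /andP[z0 zt] <-; apply: H0.
by exists s => //; rewrite /= in_itv /= hs hst.
Qed.

Lemma cum_ge0 (F : R -> R) x : cumulative F -> 0 <= x -> 0 <= F x.
Proof. by move=> [F0 Fm] x0; rewrite -F0; apply: Fm. Qed.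

Lemma arr_bound (F : R -> R) s r a b : cumulative F ->
  arrival_curve F (leaky_bucket s r) -> 0 <= s -> 0 <= r ->
  0 <= a -> a <= b -> F b - F a <= s + r * (b - a).
Proof.
move=> cF aF s0 r0 a0 ab.
have b0 : 0 <= b by apply: le_trans ab.
have H := aF b b0.
have := conv_le F (leaky_bucket s r) b (b - a).
have -> : b - (b - a) = a by rewrite opprB addrC subrK.
rewrite /leaky_bucket => H2.
have : F b <= F a + (s + r * (b - a)).
  apply: (le_trans H); apply: H2; last by rewrite lerBlDr lerDl.
    move=> y y0 yb; apply: addr_ge0; first by apply: cum_ge0; rewrite // subr_ge0.
    by apply: addr_ge0 => //; apply: mulr_ge0.
  by rewrite subr_ge0.
by rewrite -lerBlDl.
Qed.

Lemma pos_ge (x : R) : x <= pos x.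
Proof. by rewrite /pos le_max lexx orbT. Qed.
Lemma pos_ge0 (x : R) : 0 <= pos x.
Proof. by rewrite /pos le_max lexx. Qed.

Lemma pos_id (x : R) : 0 <= x -> pos x = x.
Proof. by move=> x0; rewrite /pos; apply/max_idPr. Qed.
Lemma pos_0 (x : R) : x <= 0 -> pos x = 0.
Proof. by move=> x0; rewrite /pos; apply/max_idPl. Qed.

Lemma sum_all (a b : nat) (c : pred nat) (X : nat -> R) :
  (forall m, (a <= m < b)%N -> c m) ->
  \sum_(a <= m < b | c m) X m = \sum_(a <= m < b) X m.
Proof.
move=> H; rewrite big_nat_cond [RHS]big_nat_cond; apply: eq_bigl => m.
by case/boolP: (a <= m < b)%N => //= /H ->.
Qed.

Lemma sum_none (a b : nat) (c : pred nat) (X : nat -> R) :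
  (forall m, (a <= m < b)%N -> ~~ c m) ->
  \sum_(a <= m < b | c m) X m = 0.
Proof.
move=> H; rewrite big_nat_cond big_pred0 // => m.
by case/boolP: (a <= m < b)%N => //= /H /negbTE.
Qed.

Lemma pernode_alg (Rm Tm Lm lat Rsub S Hs F Dl e : R) :
  0 < Rm -> 0 <= Lm -> lat = Tm + Lm / Rm -> Rsub <= Rm - S -> 0 <= Rsub ->
  0 <= S -> 0 <= Hs -> 0 <= F -> 0 <= e ->
  Rm * pos (Dl - Tm) - Lm - Rm * e <= F + Hs ->
  Rsub * (Dl - lat) - S * lat + (S * Dl - Hs) - Rm * e <= F.
Proof.
move=> Rm0 Lm0 latE RS Rs0 S0 Hs0 F0 e0 H.
have Re0 : 0 <= Rm * e by apply: mulr_ge0 => //; apply: ltW.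
case: (lerP lat Dl) => hl.
  have E1 : Rm * (Dl - Tm) - Lm = Rm * (Dl - lat).
    have RL : Rm * (Lm / Rm) = Lm by rewrite mulrC divfK // gt_eqF.
    rewrite latE; lra.
  have E2 : Rm * (Dl - Tm) <= Rm * pos (Dl - Tm).
    by apply: ler_wpM2l; [apply: ltW | apply: pos_ge].
  have E3 : 0 <= (Rm - S - Rsub) * (Dl - lat).
    by apply: mulr_ge0; lra.
  lra.
have E4 : (Rsub + S) * (Dl - lat) <= 0.
  by apply: mulr_ge0_le0; lra.
lra.
Qed.

End Gen.

Section Main.
Variables (R : realType) (M : nat) (Flow : finType)
  (first h P : Flow -> nat) (Lmax rho sigma0 : Flow -> R)
  (sigma : Flow -> nat -> R) (Rk Tk : nat -> R) (A D : Flow -> nat -> R -> R).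
Hypotheses (HM : (0 < M)%N)
  (Hfirst : forall i, (first i < M)%N)
  (Hh : forall i, (0 < h i <= M)%N)
  (HR : forall k, (k < M)%N -> 0 < Rk k)
  (HT : forall k, (k < M)%N -> 0 <= Tk k)
  (Hrho : forall i, 0 <= rho i)
  (Hsig0 : forall i, 0 <= sigma0 i)
  (Hsig : forall i k, 0 <= sigma i k)
  (HL : forall i, 0 <= Lmax i)
  (Hstab : forall k, (k < M)%N -> \sum_(i | crosses M first h i k) rho i <= Rk k)
  (Hcum : forall i k, crosses M first h i k -> cumulative (A i k) /\ cumulative (D i k))
  (Hcaus : forall i k t, crosses M first h i k -> 0 <= t -> D i k t <= A i k t)
  (Hcons : forall i m, (m.+1 < h i)%N ->
     A i (ring_node M (first i) m.+1) = D i (ring_node M (first i) m))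
  (Harr0 : forall i, arrival_curve (A i (first i)) (leaky_bucket (sigma0 i) (rho i)))
  (Harr : forall i k, crosses M first h i k ->
     arrival_curve (A i k) (leaky_bucket (sigma i k) (rho i)))
  (Hstrict : forall k s t, (k < M)%N -> 0 <= s -> s <= t ->
     (forall u, s < u -> u < t -> 0 < \sum_(i | crosses M first h i k) (A i k u - D i k u)) ->
     rate_latency (Rk k) (Tk k) (t - s) <= \sum_(i | crosses M first h i k) (D i k t - D i k s))
  (Hfp : forall g k s t, crosses M first h g k -> 0 <= s -> s <= t ->
     (forall u, s < u -> u < t ->
        0 < \sum_(i in g |: hp M first h P g k) (A i k u - D i k u)) ->
     \sum_(j in lp M first h P g k) (D j k t - D j k s)
       <= \big[Num.max/0]_(j in lp M first h P g k) Lmax j).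
Variables (f : Flow) (n : nat).
Hypothesis (Hn : (1 <= n <= h f)%N).

Local Notation node := (ring_node M (first f)).
Local Notation cr := (crosses M first h).
Local Notation hpk := (hp M first h P f).
Local Notation lpk := (lp M first h P f).
Local Notation Lk k := (\big[Num.max/0]_(j in lp M first h P f k) Lmax j).

Lemma ltM a m : (ring_node M a m < M)%N.
Proof. exact: ltn_pmod. Qed.

Lemma cr_node i p : (p < h i)%N -> cr i (ring_node M (first i) p).
Proof. by move=> hp; apply/crossesP; exists p. Qed.

Lemma hp_cr k i : i \in hpk k -> cr i k.
Proof. by rewrite inE => /andP[/andP[]]. Qed.

Lemma f_notin_hp k : f \notin hpk k.
Proof. by rewrite inE eqxx. Qed.

Lemma fhp_cr k i : cr f k -> i \in f |: hpk k -> cr i k.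
Proof. by move=> cf; rewrite in_setU1 => /orP[/eqP->|/hp_cr]. Qed.

Lemma split_cross k (G : Flow -> R) : cr f k ->
  \sum_(i | cr i k) G i = \sum_(i in f |: hpk k) G i + \sum_(i in lpk k) G i.
Proof.
move=> cf; rewrite (bigID (fun i => P f < P i)%N) /= addrC; congr (_ + _).
  apply: eq_bigl => i; rewrite in_setU1 inE.
  case: (eqVneq i f) => [->|nif] /=; first by rewrite cf ltnn.
  by rewrite -leqNgt andbC.
by apply: eq_bigl => i; rewrite inE.
Qed.

Lemma Lk_ge0 k : 0 <= Lk k.
Proof.
apply: (big_ind (fun x => 0 <= x)) => //.
  by move=> x y x0 y0; rewrite le_max x0.
Qed.

Definition Bk k v := \sum_(i in f |: hpk k) (A i k v - D i k v).

Lemma pos_lip (x y : R) : x <= y -> pos y - (y - x) <= pos x.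
Proof.
move=> xy; have h1 := pos_ge x; have h2 := pos_ge0 x; move: h1 h2.
case: (lerP 0 y) => y0.
  by rewrite (@pos_id _ y y0); lra.
by rewrite (@pos_0 _ y (ltW y0)); lra.
Qed.

Definition NP e m t' u := [/\ 0 <= u, u <= t',
  (forall i, i \in f |: hpk (node m) -> A i (node m) u = D i (node m) u) &
  Rk (node m) * pos (t' - u - Tk (node m)) - Lk (node m) - Rk (node m) * e <=
  (D f (node m) t' - D f (node m) u)
    + \sum_(j in hpk (node m)) (D j (node m) t' - D j (node m) u)].

Lemma nodeU m t' e : (m < n)%N -> 0 <= t' -> 0 < e -> exists u, [/\ 0 <= u, u <= t',
  (forall i, i \in f |: hpk (node m) -> A i (node m) u = D i (node m) u) &
  Rk (node m) * pos (t' - u - Tk (node m)) - Lk (node m) - Rk (node m) * e <=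
  (D f (node m) t' - D f (node m) u)
    + \sum_(j in hpk (node m)) (D j (node m) t' - D j (node m) u)].
Proof.
move=> mn t0 e0.
set k := node m.
have kM : (k < M)%N := ltM _ _.
have cf : cr f k by apply: cr_node; lia.
have crk i : i \in f |: hpk k -> cr i k := fhp_cr k i cf.
have Bge0 v : 0 <= v -> 0 <= Bk k v.
  move=> v0; apply: sumr_ge0 => i /crk ci; rewrite subr_ge0; exact: Hcaus.
pose Z := [set v : R | 0 <= v /\ v <= t' /\ Bk k v = 0]%classic.
have Z0 : Z 0.
  split; first done. split; first done. apply: big1 => i /crk ci.
  by case: (Hcum _ _ ci) => [[-> _] [-> _]]; rewrite subrr.
have hsZ : has_sup Z.
  split; first by exists 0.
  by exists t' => v [_ []].
set s := sup Z.
have ubs := sup_upper_bound hsZ.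
have s0 : 0 <= s by apply: ubs.
have st : s <= t' by apply: ge_sup; [exists 0 | move=> v [_ []]].
have [u Zu su] := sup_adherent e0 hsZ.
case: (Zu) => u0 [ut Bu].
have us : u <= s by apply: ubs.
exists u; split => //.
  move=> i hi; apply/eqP; rewrite -subr_eq0; apply/eqP.
  apply: (psumr_eq0P _ Bu hi) => j /crk cj; rewrite subr_ge0; exact: Hcaus.
have bl v : s < v -> v < t' -> 0 < Bk k v.
  move=> sv vt; have v0 : 0 <= v by apply: le_trans (ltW sv).
  rewrite lt_def Bge0 // andbT; apply/eqP => Bv.
  have : v <= s by apply: ubs; split; [|split] => //; apply: ltW.
  by rewrite leNgt sv.
have strict := Hstrict k s t' kM s0 st.
have lpge0 v : 0 <= v -> 0 <= \sum_(i in lpk k) (A i k v - D i k v).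
  move=> v0; apply: sumr_ge0 => i; rewrite inE => /andP[ci _].
  by rewrite subr_ge0; apply: Hcaus.
have {}strict := strict (fun v sv vt =>
  ltac:(rewrite split_cross //; apply: (lt_le_trans (bl v sv vt));
        rewrite lerDl; apply: lpge0; apply: le_trans (ltW sv))).
have fp := Hfp _ _ _ _ cf s0 st bl.
rewrite split_cross // in strict.
have mono : \sum_(i in f |: hpk k) (D i k t' - D i k s)
           <= \sum_(i in f |: hpk k) (D i k t' - D i k u).
  apply: ler_sum => i /crk ci; rewrite lerB //.
  by case: (Hcum _ _ ci) => _ [_ Dm]; apply: Dm.
rewrite !big_setU1 /= ?f_notin_hp // in mono.
have lip := pos_lip (t' - s - Tk k) (t' - u - Tk k).
have RkP := HR k kM.
have key : Rk k * pos (t' - u - Tk k) - Rk k * e <= Rk k * pos (t' - s - Tk k).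
  rewrite -mulrBr; apply: ler_wpM2l; first exact: ltW.
  have lip' : pos (t' - u - Tk k) - (t' - u - Tk k - (t' - s - Tk k)) <= pos (t' - s - Tk k) by apply: lip; lra.
  apply: le_trans lip'. move: su. rewrite -/s. lra.
have {}strict := strict s0.
rewrite big_setU1 /= ?f_notin_hp // in strict.
move: strict fp mono key; rewrite /rate_latency; lra.
Qed.

Lemma tel i (tm : nat -> R) a L p0 :
  (p0 + L < h i)%N ->
  (forall q, (q <= L)%N -> node (a + q)%N = ring_node M (first i) (p0 + q)%N) ->
  (forall q, (q <= L)%N ->
     A i (node (a + q)%N) (tm (a + q)%N) = D i (node (a + q)%N) (tm (a + q)%N)) ->
  \sum_(a <= m < (a + L.+1)%N) (D i (node m) (tm m.+1) - D i (node m) (tm m))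
    = D i (node (a + L)%N) (tm (a + L).+1%N) - A i (node a) (tm a)
  /\ (forall x, 0 <= x -> D i (node (a + L)%N) x <= A i (node a) x).
Proof.
elim: L => [|L IH] hL hn hAD.
  rewrite !addn0 addn1 big_nat1; split.
    by have := hAD 0%N (leqnn _); rewrite !addn0 => ->.
  move=> x x0; apply: Hcaus => //.
  by have := hn 0%N (leqnn _); rewrite !addn0 => ->; apply: cr_node; lia.
have [IH1 IH2] := IH ltac:(lia) (fun q hq => hn q ltac:(lia))
                     (fun q hq => hAD q ltac:(lia)).
have ecs : A i (node (a + L.+1)%N) = D i (node (a + L)%N).
  rewrite hn // (hn L) ?leqnSn // addnS; apply: Hcons; lia.
have crL : cr i (node (a + L.+1)%N) by rewrite hn //; apply: cr_node; lia.
rewrite addnS big_nat_recr /= ?leq_addr // IH1; split.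
  have := hAD L.+1 (leqnn _); rewrite !addnS => <-.
  by rewrite -addnS ecs addnS; lra.
move=> x x0; apply: le_trans (Hcaus _ _ _ crL x0) _.
by rewrite ecs; apply: IH2.
Qed.

Lemma segb i (tm : nat -> R) a L p0 sg :
  (p0 + L < h i)%N ->
  (forall q, (q <= L)%N -> node (a + q)%N = ring_node M (first i) (p0 + q)%N) ->
  (forall q, (q <= L)%N ->
     A i (node (a + q)%N) (tm (a + q)%N) = D i (node (a + q)%N) (tm (a + q)%N)) ->
  0 <= tm a -> tm a <= tm (a + L).+1%N ->
  cumulative (A i (node a)) ->
  arrival_curve (A i (node a)) (leaky_bucket sg (rho i)) -> 0 <= sg ->
  \sum_(a <= m < (a + L.+1)%N)
     (D i (node m) (tm m.+1) - D i (node m) (tm m) - rho i * (tm m.+1 - tm m))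
   <= sg.
Proof.
move=> hL hn hAD ta0 tab cA aA sg0.
have [T1 T2] := tel i tm a L p0 hL hn hAD.
rewrite sumrB T1 -mulr_sumr telescope_sumr ?leq_addr // -addnS.
have tb0 : 0 <= tm (a + L).+1 by apply: le_trans tab.
have := T2 _ tb0.
have := @arr_bound _ _ _ _ _ _ cA aA sg0 (Hrho i) ta0 tab.
rewrite addnS; lra.
Qed.

Lemma perj j (tm : nat -> R) :
  (forall m, (m <= n)%N -> 0 <= tm m) ->
  (forall a b, (a <= b <= n)%N -> tm a <= tm b) ->
  (forall m, (m < n)%N -> cr j (node m) -> A j (node m) (tm m) = D j (node m) (tm m)) ->
  \sum_(m < n | cr j (node m))
     (D j (node m) (tm m.+1) - D j (node m) (tm m) - rho j * (tm m.+1 - tm m))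
   <= sigma j (first f) * (cr j (first f) && (first j != first f))%:R
      + sigma0 j * (cr f (first j))%:R.
Proof.
move=> t0 tmono hAD.
pose X := fun m => D j (node m) (tm m.+1) - D j (node m) (tm m) - rho j * (tm m.+1 - tm m).
have -> : \sum_(m < n | cr j (node m))
     (D j (node m) (tm m.+1) - D j (node m) (tm m) - rho j * (tm m.+1 - tm m))
   = \sum_(0 <= m < n | cr j (node m)) X m by rewrite big_mkord.
have ffM := Hfirst f; have fjM := Hfirst j.
have hjM := Hh j; have hfM := Hh f.
have := @modn_2M M (first j + M - first f)%N HM.
set d := ((first j + M - first f) %% M)%N => hd.
have {}hd : (d = if first j + M - first f < M then first j + M - first f
                 else first j + M - first f - M)%N by rewrite hd //; lia.
have dM : (d < M)%N by rewrite /d ltn_pmod.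
have ccall m : (m < M)%N -> (exists2 p, (p < h j)%N &
      ((first f + m) %% M = (first j + p) %% M)%N) <->
   (((d <= m) && (m < d + h j)) || ((m < d) && (m + M < d + h j)))%N.
  by move=> mM; apply: (@cross_char M (first f) (first j) (h j) m HM ffM fjM hjM mM).
clearbody d.
have hcr m : (m < n)%N -> cr j (node m) =
   (((d <= m) && (m < d + h j)) || ((m < d) && (m + M < d + h j)))%N.
  move=> mn; have cc := ccall m ltac:(lia).
  apply/idP/idP.
    by move/crossesP => [p hp eq]; apply: cc.1; exists p.
  by move/cc.2 => [p hp eq]; apply/crossesP; exists p.
pose e1 := minn n (d + h j - M)%N.
rewrite (@big_cat_nat _ _ _ e1) /= ?leq0n ?geq_minl //.
rewrite (@sum_all _ 0 e1); last first.
  move=> m /andP[_ me1]; rewrite hcr; lia.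
have n0 : node 0 = first f by rewrite /ring_node addn0 modn_small.
have seg1 : \sum_(0 <= m < e1) X m
             <= sigma j (first f) * (cr j (first f) && (first j != first f))%:R.
  case: (posnP e1) => [e10 | e1p].
    by rewrite e10 big_geq // mulr_ge0.
  have crff : cr j (first f).
    apply/crossesP; exists (M - d)%N; first lia.
    rewrite /ring_node !(@modn_2M M _ HM); try lia.
    by move: hd; repeat case: ifP; lia.
  have nff : first j != first f.
    apply/eqP => ee; move: hd; rewrite ee; repeat case: ifP; lia.
  rewrite crff nff mulr1.
  have := @segb j tm 0 e1.-1 (M - d) (sigma j (node 0)).
  rewrite add0n prednK // n0; apply => //.
  - lia.
  - move=> q hq; rewrite add0n /ring_node !(@modn_2M M _ HM); try lia.
    by move: hd; repeat case: ifP; lia.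
  - move=> q hq; rewrite add0n; apply: hAD; first lia.
    rewrite hcr; lia.
  - by apply: t0.
  - by apply: tmono; lia.
  - by case: (Hcum _ _ crff).
  - exact: Harr.
apply: lerD; first exact: seg1.
have rj0 : ring_node M (first j) 0 = first j by rewrite /ring_node addn0 modn_small.
case: (ltnP d n) => [dn | nd]; last first.
  rewrite sum_none ?mulr_ge0 // => m /andP[m1 m2]; rewrite hcr; lia.
pose e2 := minn n (d + h j)%N.
rewrite (@big_cat_nat _ _ _ d) /=; [|lia|lia].
rewrite (@sum_none _ e1 d) ?add0r; last by move=> m /andP[m1 m2]; rewrite hcr; lia.
rewrite (@big_cat_nat _ _ _ e2) /=; [|lia|lia].
rewrite (@sum_all _ d e2); last by move=> m /andP[m1 m2]; rewrite hcr; lia.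
rewrite (@sum_none _ e2 n) ?addr0; last by move=> m /andP[m1 m2]; rewrite hcr; lia.
have nd_ : node d = first j.
  rewrite /ring_node !(@modn_2M M _ HM); try lia.
  by move: hd; repeat case: ifP; lia.
have crfj : cr f (first j) by rewrite -nd_; apply: cr_node; lia.
rewrite crfj mulr1.
have crj : cr j (first j) by have := cr_node j 0 ltac:(lia); rewrite rj0.
have := @segb j tm d (e2 - d).-1 0 (sigma0 j).
rewrite prednK ?subn_gt0; last lia.
rewrite subnKC; last lia.
rewrite nd_; apply => //.
- lia.
- move=> q hq; rewrite /ring_node !(@modn_2M M _ HM); try lia.
  by move: hd; repeat case: ifP; lia.
- move=> q hq; apply: hAD; first lia.
  rewrite hcr; lia.
- by apply: t0; lia.
- by apply: tmono; lia.
- by case: (Hcum _ _ crj).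
Qed.

Lemma hpK m j : (m < n)%N ->
  (j \in hpk (node m)) = (j \in Kle M first h P f n) && cr j (node m).
Proof.
move=> mn; rewrite !inE.
case cj: (cr j (node m)); last by rewrite !andbF.
have -> : has (cr j) (path_nodes M (first f) n).
  apply/hasP; exists (node m) => //; apply: map_f; rewrite mem_iota; lia.
by rewrite !andbT.
Qed.

Lemma exch (G : Flow -> nat -> R) :
  \sum_(m < n) \sum_(j in hpk (node m)) G j m
  = \sum_(j in Kle M first h P f n) \sum_(m < n | cr j (node m)) G j m.
Proof.
have -> : \sum_(m < n) \sum_(j in hpk (node m)) G j m
   = \sum_(m < n) \sum_j (if j \in hpk (node m) then G j m else 0).
  by under eq_bigr => m _ do rewrite big_mkcond.
rewrite exchange_big /= [RHS]big_mkcond; apply: eq_bigr => j _.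
case: ifP => jK.
  rewrite [RHS]big_mkcond; apply: eq_bigr => m _; by rewrite hpK // jK.
by apply: big1 => m _; rewrite hpK // jK.
Qed.

Lemma Dmono i k a b : cr i k -> 0 <= a -> a <= b -> D i k a <= D i k b.
Proof. by move=> ci a0 ab; case: (Hcum _ _ ci) => _ [_ Dm]; apply: Dm. Qed.

Lemma resR_ge0 k : (k < M)%N -> cr f k -> 0 <= Rk k - \sum_(j in hpk k) rho j.
Proof.
move=> kM cf; rewrite subr_ge0; apply: le_trans (Hstab k kM).
rewrite (split_cross k _ cf) big_setU1 /= ?f_notin_hp //.
have := Hrho f; have : 0 <= \sum_(i in lpk k) rho i by apply: sumr_ge0.
lra.
Qed.

Lemma main :
  let nd := ring_node M (first f) in
  let resR := fun k => Rk k - \sum_(j in hp M first h P f k) rho j in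
  let Rsub := \big[Num.min/resR (nd 0%N)]_(m < n) resR (nd m) in
  let lat := fun k => Tk k + (\big[Num.max/0]_(j in lp M first h P f k) Lmax j) / Rk k in
  let Tsub :=
      \sum_(m < n) lat (nd m)
    + \sum_(i in Kle M first h P f n)
        sigma i (first f) * (crosses M first h i (first f) && (first i != first f))%:R / Rsub
    + \sum_(i in Kle M first h P f n)
        (sigma0 i * (crosses M first h f (first i))%:R
         + rho i * \sum_(m < n | crosses M first h i (nd m)) lat (nd m)) / Rsub in
  service_curve (A f (first f)) (D f (nd n.-1)) (rate_latency Rsub Tsub).
Proof.
move=> nd resR Rsub lat Tsub t t0.
have n0p : (0 < n)%N by case/andP: Hn.
have nhf : (n <= h f)%N by case/andP: Hn.
have crfm m : (m < n)%N -> cr f (node m) by move=> mn; apply: cr_node; lia.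
have RsubLe m : (m < n)%N -> Rsub <= resR (node m).
  by move=> mn; apply: (@bigmin_le _ _ _ _ (Ordinal mn)).
have Rsub0 : 0 <= Rsub.
  apply: le_bigmin => [|m _]; apply: resR_ge0; try apply: ltM;
  apply: crfm => //; lia.
apply/ler_addgt0Pr => e' e'0.
set C := \sum_(m < n) Rk (node m).
have C0 : 0 <= C by apply: sumr_ge0 => m _; apply: ltW; apply: HR; apply: ltM.
have C1 : 0 < C + 1 by lra.
set e := e' / (C + 1).
have e0 : 0 < e by apply: divr_gt0.
have eC : e * C <= e'.
  have : e * (C + 1) = e' by rewrite /e divfK // gt_eqF.
  lra.
suff : minplus_conv (A f (first f)) (rate_latency Rsub Tsub) t <= D f (nd n.-1) t + e * C.
  by move=> H; apply: le_trans H _; lra.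
have ex : forall mt : nat * R, exists u : R,
    ((mt.1 < n)%N -> 0 <= mt.2 -> NP e mt.1 mt.2 u).
  move=> [m t'] /=; case: (boolP (m < n)%N) => mn; last first.
    by exists 0.
  case: (lerP 0 t') => t'0; last by exists 0 => _ h0; exfalso; lra.
  by have [u hu] := nodeU m t' e mn t'0 e0; exists u.
have [U HU] := choice ex.
pose tm m := back (fun m x => U (m, x)) n t (n - m).
have tmS m : (m < n)%N -> tm m = U (m, tm m.+1).
  move=> mn; rewrite /tm; have -> : (n - m = (n - m.+1).+1)%N by lia.
  by rewrite /=; have -> : (n - (n - m.+1).+1 = m)%N by lia.
have tmn : tm n = t by rewrite /tm subnn.
have tmall k : 0 <= back (fun m x => U (m, x)) n t k.
  elim: k => [|k IH] //=.
  by have [] := HU (n - k.+1, back (fun m x => U (m, x)) n t k)%N ltac:(simpl; lia) IH.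
have tm_ge0 m : 0 <= tm m by apply: tmall.
have NPm m : (m < n)%N -> NP e m (tm m.+1) (tm m).
  by move=> mn; rewrite (tmS _ mn); exact: (HU (m, tm m.+1) mn (tm_ge0 _)).
have tmle m : (m < n)%N -> tm m <= tm m.+1 by move=> mn; case: (NPm _ mn).
have tmmono a b : (a <= b <= n)%N -> tm a <= tm b.
  elim: b => [|b IH] /andP[ab bn]; first by have -> : a = 0%N by lia.
  case: (eqVneq a b.+1) => [->//|nab].
  by apply: (le_trans (IH _) (tmle b _)); lia.
pose Dl m := tm m.+1 - tm m.
pose Fm m := D f (node m) (tm m.+1) - D f (node m) (tm m).
pose Hjm j m := D j (node m) (tm m.+1) - D j (node m) (tm m).
have PN m : (m < n)%N ->
  Rsub * (Dl m - lat (node m)) - (\sum_(j in hpk (node m)) rho j) * lat (node m)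
  + ((\sum_(j in hpk (node m)) rho j) * Dl m - \sum_(j in hpk (node m)) Hjm j m)
  - Rk (node m) * e <= Fm m.
  move=> mn; case: (NPm _ mn) => _ _ _ ineq.
  apply: pernode_alg ineq.
  - by apply: HR; apply: ltM.
  - exact: Lk_ge0.
  - by [].
  - exact: RsubLe.
  - exact: Rsub0.
  - by apply: sumr_ge0.
  - apply: sumr_ge0 => j /hp_cr cj; rewrite subr_ge0; apply: Dmono => //.
    exact: tmle.
  - rewrite subr_ge0; apply: Dmono => //; first exact: crfm.
    exact: tmle.
  - exact: ltW.
have SD : \sum_(m < n) Dl m = t - tm 0%N.
  rewrite -(big_mkord xpredT Dl) /Dl telescope_sumr // tmn //.
have SA : \sum_(m < n) Rsub * (Dl m - lat (node m))
   = Rsub * (t - tm 0%N) - Rsub * \sum_(m < n) lat (node m).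
  by rewrite -mulr_sumr sumrB SD mulrBr.
have SB : \sum_(m < n) (\sum_(j in hpk (node m)) rho j) * lat (node m)
   = \sum_(j in Kle M first h P f n) rho j * \sum_(m < n | cr j (node m)) lat (node m).
  under eq_bigr do rewrite mulr_suml.
  by rewrite (exch (fun j m => rho j * lat (node m))); apply: eq_bigr => j _; rewrite mulr_sumr.
have SC : \sum_(m < n) ((\sum_(j in hpk (node m)) rho j) * Dl m
            - \sum_(j in hpk (node m)) Hjm j m)
   = \sum_(j in Kle M first h P f n) \sum_(m < n | cr j (node m)) (rho j * Dl m - Hjm j m).
  under eq_bigr do rewrite mulr_suml -sumrB.
  by rewrite (exch (fun j m => rho j * Dl m - Hjm j m)).
have SE : \sum_(m < n) Rk (node m) * e = e * C.
  by rewrite /C mulr_sumr; apply: eq_bigr => m _; rewrite mulrC.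
have SUM : \sum_(m < n) (Rsub * (Dl m - lat (node m))
     - (\sum_(j in hpk (node m)) rho j) * lat (node m)
     + ((\sum_(j in hpk (node m)) rho j) * Dl m - \sum_(j in hpk (node m)) Hjm j m)
     - Rk (node m) * e) <= \sum_(m < n) Fm m.
  by apply: ler_sum => m _; apply: PN.
rewrite sumrB big_split /= sumrB SA SB SC SE in SUM.
have n0 : node 0 = first f by rewrite /ring_node addn0 modn_small.
have SFh1 : (0 + n.-1 < h f)%N by rewrite add0n; apply: (leq_trans _ nhf); rewrite prednK.
have SFh2 : forall q, (q <= n.-1)%N -> node (0 + q)%N = ring_node M (first f) (0 + q)%N
  by [].
have SFh3 : forall q, (q <= n.-1)%N ->
     A f (node (0 + q)%N) (tm (0 + q)%N) = D f (node (0 + q)%N) (tm (0 + q)%N).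
  move=> q hq; have qn : (q < n)%N by rewrite -(prednK n0p) ltnS.
  rewrite add0n; case: (NPm q qn) => _ _ hAD _.
  by apply: hAD; exact: setU11.
have [SF _] := tel f tm 0%N n.-1 0 SFh1 SFh2 SFh3.
rewrite !add0n (prednK n0p) ?big_mkord ?n0 ?tmn in SF.
have SFpos : 0 <= \sum_(m < n) Fm m.
  apply: sumr_ge0 => m _; rewrite subr_ge0; apply: Dmono => //; first exact: crfm.
  exact: tmle.
pose ind1 i := (cr i (first f) && (first i != first f))%:R : R.
pose ind2 i := (cr f (first i))%:R : R.
have SCb : - \sum_(j in Kle M first h P f n) (sigma j (first f) * ind1 j + sigma0 j * ind2 j)
   <= \sum_(j in Kle M first h P f n) \sum_(m < n | cr j (node m)) (rho j * Dl m - Hjm j m).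
  rewrite -sumrN; apply: ler_sum => j jK.
  have := perj j tm (fun m _ => tm_ge0 m) tmmono.
  have -> : \sum_(m < n | cr j (node m)) (rho j * Dl m - Hjm j m)
    = - \sum_(m < n | cr j (node m))
          (D j (node m) (tm m.+1) - D j (node m) (tm m) - rho j * (tm m.+1 - tm m)).
    rewrite -sumrN; apply: eq_bigr => m _.
    by rewrite /Dl /Hjm; lra.
  rewrite lerN2; apply.
  move=> m mn cj; case: (NPm _ mn) => _ _ hAD _; apply: hAD.
  by apply/setU1P; right; rewrite hpK // jK cj.
rewrite big_split /= in SCb.
have crff : cr f (first f) by have := crfm 0%N n0p; rewrite n0.
have [cAf _] := Hcum _ _ crff.
have CV := conv_le (A f (first f)) (rate_latency Rsub Tsub) t (t - tm 0%N).
have tt0 : t - (t - tm 0%N) = tm 0%N by lra.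
rewrite tt0 in CV.
apply: le_trans (CV _ _ _) _.
- move=> y y0 yt; apply: addr_ge0; first by apply: cum_ge0 => //; lra.
  by apply: mulr_ge0 => //; apply: pos_ge0.
- have := tmmono 0%N n ltac:(by rewrite leq0n leqnn); rewrite tmn; lra.
- by have := tm_ge0 0%N; lra.
rewrite /rate_latency.
have SFe : \sum_(m < n) Fm m = D f (nd n.-1) t - A f (first f) (tm 0%N) by rewrite -SF.
have eC0 : 0 <= e * C by apply: mulr_ge0 => //; apply: ltW.
case: (boolP (0 <= t - tm 0%N - Tsub)) => hp; last first.
  have {}hp : t - tm 0%N - Tsub < 0 by rewrite ltNge.
  by rewrite (@pos_0 _ _ (ltW hp)) mulr0; lra.
rewrite pos_id //.
case: (eqVneq Rsub 0) => [->|Rn0]; first by rewrite mul0r; lra.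
have dv x : Rsub * (x / Rsub) = x by rewrite mulrC divfK.
have T2 : Rsub * \sum_(i in Kle M first h P f n)
            (sigma i (first f) * (crosses M first h i (first f) && (first i != first f))%:R / Rsub)
          = \sum_(j in Kle M first h P f n) sigma j (first f) * ind1 j.
  by rewrite mulr_sumr; apply: eq_bigr => i _; exact: dv.
have T3 : Rsub * \sum_(i in Kle M first h P f n)
        ((sigma0 i * (crosses M first h f (first i))%:R
         + rho i * \sum_(m < n | crosses M first h i (nd m)) lat (nd m)) / Rsub)
    = \sum_(j in Kle M first h P f n) sigma0 j * ind2 j
      + \sum_(j in Kle M first h P f n) rho j * \sum_(m < n | cr j (node m)) lat (node m).
  by rewrite mulr_sumr -big_split; apply: eq_bigr => i _; exact: dv.
have TT : Rsub * Tsub = Rsub * \sum_(m < n) lat (node m)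
    + \sum_(j in Kle M first h P f n) sigma j (first f) * ind1 j
    + (\sum_(j in Kle M first h P f n) sigma0 j * ind2 j
      + \sum_(j in Kle M first h P f n) rho j * \sum_(m < n | cr j (node m)) lat (node m)).
  by rewrite /Tsub !mulrDr T2 T3.
move: SUM SCb SFe TT; lra.
Qed.

End Main.

Theorem corollary2
  (R : realType) (M : nat) (Flow : finType)
  (first h P : Flow -> nat)                 (* first hop, number of hops, priority level *)
  (Lmax rho sigma0 : Flow -> R)             (* max packet length, rate, initial burst *)
  (sigma : Flow -> nat -> R)                (* sigma i k = sigma_i^{k (-) 1}: burst at input of node k *)
  (Rk Tk : nat -> R)                        (* rate-latency parameters of node k *)
  (A D : Flow -> nat -> R -> R)             (* A i k / D i k : input / output of flow i at node k *)
  (HM : (0 < M)%N)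
  (Hfirst : forall i, (first i < M)%N)
  (Hh : forall i, (0 < h i <= M)%N)
  (HR : forall k, (k < M)%N -> 0 < Rk k)
  (HT : forall k, (k < M)%N -> 0 <= Tk k)
  (Hrho : forall i, 0 <= rho i)
  (Hsig0 : forall i, 0 <= sigma0 i)
  (Hsig : forall i k, 0 <= sigma i k)
  (HL : forall i, 0 <= Lmax i)
  (* stability *)
  (Hstab : forall k, (k < M)%N -> \sum_(i | crosses M first h i k) rho i <= Rk k)
  (* cumulative functions, causality, flow conservation along the path *)
  (Hcum : forall i k, crosses M first h i k -> cumulative (A i k) /\ cumulative (D i k))
  (Hcaus : forall i k t, crosses M first h i k -> 0 <= t -> D i k t <= A i k t)
  (Hcons : forall i m, (m.+1 < h i)%N ->
     A i (ring_node M (first i) m.+1) = D i (ring_node M (first i) m))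
  (* leaky-bucket arrival curves *)
  (Harr0 : forall i, arrival_curve (A i (first i)) (leaky_bucket (sigma0 i) (rho i)))
  (Harr : forall i k, crosses M first h i k ->
     arrival_curve (A i k) (leaky_bucket (sigma i k) (rho i)))
  (* node k offers the strict rate-latency service curve beta^k to the aggregate *)
  (Hstrict : forall k s t, (k < M)%N -> 0 <= s -> s <= t ->
     (forall u, s < u -> u < t -> 0 < \sum_(i | crosses M first h i k) (A i k u - D i k u)) ->
     rate_latency (Rk k) (Tk k) (t - s) <= \sum_(i | crosses M first h i k) (D i k t - D i k s))
  (* non-preemptive fixed priority: during a backlogged period of the flows of priority
     <= P(g), lower-priority flows are served for at most one (maximal) packet *)
  (Hfp : forall g k s t, crosses M first h g k -> 0 <= s -> s <= t ->
     (forall u, s < u -> u < t ->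
        0 < \sum_(i in g |: hp M first h P g k) (A i k u - D i k u)) ->
     \sum_(j in lp M first h P g k) (D j k t - D j k s)
       <= \big[Num.max/0]_(j in lp M first h P g k) Lmax j)
  (f : Flow) (n : nat) (Hn : (1 <= n <= h f)%N) :
  let node := ring_node M (first f) in
  let resR := fun k => Rk k - \sum_(j in hp M first h P f k) rho j in
  let Rsub := \big[Num.min/resR (node 0%N)]_(m < n) resR (node m) in
  let lat := fun k => Tk k + (\big[Num.max/0]_(j in lp M first h P f k) Lmax j) / Rk k in
  let Tsub :=
      \sum_(m < n) lat (node m)
    + \sum_(i in Kle M first h P f n)
        sigma i (first f) * (crosses M first h i (first f) && (first i != first f))%:R / Rsub
    + \sum_(i in Kle M first h P f n)
        (sigma0 i * (crosses M first h f (first i))%:R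
         + rho i * \sum_(m < n | crosses M first h i (node m)) lat (node m)) / Rsub in
  service_curve (A f (first f)) (D f (node n.-1)) (rate_latency Rsub Tsub).
Proof.
by apply: main.
Qed.
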